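(* Let $\alpha>0$, $\hbar>0$, $\sigma>0$ and let $n\geq 2$ be an integer. Define $$\psi_n(p)=N_G\,\Theta(-p)\,p^{n}e^{-\frac{p^{2}}{2\sigma^{2}}},\qquad N_G=\sqrt{\frac{2}{\sigma^{2n+1}\Gamma\left(n+\frac12\right)}},$$ where $\Theta$ is the Heaviside step function (so $\int_{\mathbb{R}}\psi_n^2\,dp=1$), and for $\tau\in\mathbb{R}$ let $$\mathcal{A}_n(\tau)=4\pi\int_{\mathbb{R}}dp\,\frac{\alpha^{4}}{p^{4}}\tau^{2}\,\psi_n(p)^{2}+4\pi\hbar^{2}\int_{\mathbb{R}}dp\,\left(\frac{d\psi_n(p)}{dp}\right)^{2}.$$ Then $\mathcal{A}_n(\tau)$ is finite for every $\tau$, attains its minimum over $\tau\in\mathbb{R}$ at $\tau=0$, and $$\mathcal{A}_n(0)=\frac{4\pi\hbar^{2}}{\sigma^{2}}\left(\frac{4n-1}{4n-2}\right)=4\pi(\Delta a)^{2},$$ where $(\Delta a)^2=\langle\hat a^2\rangle-\langle\hat a\rangle^2$ is the variance of the operator $\hat a=i\hbar\,\frac{d}{dp}$ in the state $\psi_n$, for which $\langle \hat a\rangle=\int\psi_n\, i\hbar\psi_n'\,dp=0$ and $\Delta a=\frac{\hbar}{\sigma}\sqrt{\frac{4n-1}{4n-2}}$.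
   Context: $\mathcal{A}_n(\tau)$ is the expectation value of the gauge-invariant area of 2-spheres in the Schwarzschild interior at relational time $\tau$ with clock operator $\hat T=\hat b$, evaluated on the Gaussian-type physical state $\psi_n(p_a)$; $\hat a$ is the areal-radius variable in momentum representation. *)

(* Defs.v *)
From Stdlib Require Import Reals.
From Coquelicot Require Import Coquelicot.
Open Scope R_scope.

Definition Gamma (s : R) : R :=
  RInt_gen (fun t => Rpower t (s - 1) * exp (- t)) (at_right 0) (Rbar_locally p_infty).

(* Heaviside step function (value at 0 irrelevant here: it multiplies p^n). *)
Definition Heaviside (x : R) : R := if Rlt_dec 0 x then 1 else 0.

Definition int_R (f : R -> R) : R :=
  RInt_gen f (Rbar_locally m_infty) (Rbar_locally p_infty).
Definition ex_int_R (f : R -> R) : Prop :=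
  ex_RInt_gen f (Rbar_locally m_infty) (Rbar_locally p_infty).

Definition N_G (sigma : R) (n : nat) : R :=
  sqrt (2 / (sigma ^ (2 * n + 1) * Gamma (INR n + 1 / 2))).

Definition psi (sigma : R) (n : nat) (p : R) : R :=
  N_G sigma n * Heaviside (- p) * p ^ n * exp (- p ^ 2 / (2 * sigma ^ 2)).

Definition A_integrand1 (alpha sigma : R) (n : nat) (tau p : R) : R :=
  alpha ^ 4 / p ^ 4 * tau ^ 2 * (psi sigma n p) ^ 2.
Definition A_integrand2 (sigma : R) (n : nat) (p : R) : R :=
  (Derive (psi sigma n) p) ^ 2.

Definition A_n (alpha hbar sigma : R) (n : nat) (tau : R) : R :=
  4 * PI * int_R (A_integrand1 alpha sigma n tau)
  + 4 * PI * hbar ^ 2 * int_R (A_integrand2 sigma n).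

(* a-hat = i hbar d/dp acting on the real state psi_n *)
Definition expect_a (hbar sigma : R) (n : nat) : C :=
  (0, hbar * int_R (fun p => psi sigma n p * Derive (psi sigma n) p)).
(* <a^2> = int psi (i hbar)^2 psi'' dp = - hbar^2 int psi psi'' dp *)
Definition expect_a2 (hbar sigma : R) (n : nat) : C :=
  (- hbar ^ 2 * int_R (fun p => psi sigma n p * Derive (Derive (psi sigma n)) p), 0).
Definition Delta_a_sq (hbar sigma : R) (n : nat) : C :=
  Cminus (expect_a2 hbar sigma n) (Cmult (expect_a hbar sigma n) (expect_a hbar sigma n)).

(* Main.v *)
Require Import Defs.
From Stdlib Require Import Reals Lra Lia Psatz.
From Coquelicot Require Import Coquelicot.
Open Scope R_scope.

Lemma G1 (f : R -> R) (Fa : (R->Prop)->Prop) (FF : Filter Fa) (b l : R) :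
  Fa (fun x => ex_RInt f x b) -> filterlim (fun x => RInt f x b) Fa (locally l) ->
  is_RInt_gen f Fa (at_point b) l.
Proof.
  intros Hex Hlim P HP.
  apply Filter_prod with (fun x => ex_RInt f x b /\ P (RInt f x b)) (fun y => y = b).
  - apply filter_and; [exact Hex | apply Hlim; exact HP].
  - unfold at_point; reflexivity.
  - intros x y [H1 H2] ->. exact (ex_intro _ _ (conj (RInt_correct _ _ _ H1) H2)).
Qed.

Lemma G2 (f : R -> R) (Fb : (R->Prop)->Prop) (FF : Filter Fb) (a l : R) :
  Fb (fun y => ex_RInt f a y) -> filterlim (fun y => RInt f a y) Fb (locally l) ->
  is_RInt_gen f (at_point a) Fb l.
Proof.
  intros Hex Hlim P HP.
  apply Filter_prod with (fun x => x = a) (fun y => ex_RInt f a y /\ P (RInt f a y)).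
  - unfold at_point; reflexivity.
  - apply filter_and; [exact Hex | apply Hlim; exact HP].
  - intros x y -> [H1 H2]. exact (ex_intro _ _ (conj (RInt_correct _ _ _ H1) H2)).
Qed.

Lemma RInt_ge0 (f : R -> R) a b : a <= b -> ex_RInt f a b ->
  (forall x, a < x < b -> 0 <= f x) -> 0 <= RInt f a b.
Proof.
  intros Hab Hex Hp.
  replace 0 with (RInt (fun _ => 0) a b).
  - apply RInt_le; auto. apply ex_RInt_const.
  - rewrite RInt_const. unfold scal; simpl; unfold mult; simpl. ring.
Qed.

Lemma G3 (f : R -> R) (a M : R) :
  (forall x, a <= x -> continuous f x) -> (forall x, a <= x -> 0 <= f x) ->
  (forall b, a <= b -> RInt f a b <= M) ->
  exists l, filterlim (fun b => RInt f a b) (Rbar_locally p_infty) (locally l)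
     /\ (forall b, a <= b -> RInt f a b <= l).
Proof.
  intros Hc Hp HM.
  assert (Hex : forall b c, a <= b -> ex_RInt f b c \/ c < a).
  { intros b c Hb. destruct (Rlt_dec c a) as [H|H]; [right; auto|left].
    apply (ex_RInt_continuous (V:=R_CompleteNormedModule)). intros z Hz. apply Hc.
    unfold Rmin in Hz; destruct (Rle_dec b c); lra. }
  assert (Hexa : forall b, a <= b -> ex_RInt f a b).
  { intros b Hb. destruct (Hex a b (Rle_refl a)); auto; lra. }
  assert (Hmono : forall b c, a <= b -> b <= c -> RInt f a b <= RInt f a c).
  { intros b c Hb Hbc.
    rewrite <- (RInt_Chasles f a b c); auto.
    2:{ destruct (Hex b c Hb); auto; lra. }
    assert (0 <= RInt f b c).
    { apply RInt_ge0; [lra| |intros; apply Hp; lra]. destruct (Hex b c Hb); auto; lra. }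
    unfold plus; simpl. lra. }
  set (E := fun y => exists b, a <= b /\ y = RInt f a b).
  assert (Hb : bound E). { exists M. intros y [b [Hb ->]]. apply HM; auto. }
  assert (Hne : exists y, E y). { exists (RInt f a a). exists a. split; auto; lra. }
  destruct (completeness E Hb Hne) as [l [Hl1 Hl2]].
  exists l. split.
  - apply filterlim_locally. intros eps.
    assert (exists b, a <= b /\ l - eps < RInt f a b) as [b0 [Hb0 Hb0']].
    { apply Classical_Prop.NNPP. intro Hn.
      assert (is_upper_bound E (l - eps)).
      { intros y [b [Hb' ->]]. apply Rnot_lt_le. intro. apply Hn. exists b; auto. }
      specialize (Hl2 _ H). destruct eps; simpl in *; lra. }
    exists b0. intros x Hx. unfold ball; simpl; unfold AbsRing_ball; simpl.
    unfold abs, minus, plus, opp; simpl.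
    assert (RInt f a x <= l). { apply Hl1. exists x. split; auto; lra. }
    assert (RInt f a b0 <= RInt f a x) by (apply Hmono; lra).
    apply Rabs_def1; lra.
  - intros b Hb'. apply Hl1. exists b; auto.
Qed.

Lemma exp_pow_bound (x : R) (j : nat) : 0 <= x -> x ^ j / INR (Factorial.fact j) <= exp x.
Proof.
  intros Hx. eapply Rle_trans; [|apply (exp_ge_taylor x j Hx)].
  assert (Hpos : forall k, 0 <= x ^ k / INR (Factorial.fact k)).
  { intros k. apply Rmult_le_pos; [apply pow_le; auto|].
    apply Rlt_le, Rinv_0_lt_compat, INR_fact_lt_0. }
  destruct j as [|j].
  - simpl. lra.
  - rewrite tech5. assert (0 <= sum_f_R0 (fun k => x ^ k / INR (Factorial.fact k)) j)
      by (apply cond_pos_sum; auto). lra.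
Qed.

Lemma PL (c : R) (k : nat) : 0 < c ->
  filterlim (fun p => p ^ k * exp (- (c * p ^ 2))) (Rbar_locally m_infty) (locally 0).
Proof.
  intros Hc. apply filterlim_locally. intros [eps Heps]. simpl.
  set (j := S k).
  set (C := INR (Factorial.fact j) / c ^ j).
  assert (HC : 0 < C).
  { unfold C. apply Rmult_lt_0_compat; [apply INR_fact_lt_0|].
    apply Rinv_0_lt_compat, pow_lt; auto. }
  exists (- (1 + C / eps)). intros p Hp.
  unfold ball; simpl; unfold AbsRing_ball; simpl. unfold abs, minus, plus, opp; simpl.
  rewrite Ropp_0, Rplus_0_r, Rabs_mult, <- RPow_abs, (Rabs_pos_eq (exp _)) by (apply Rlt_le, exp_pos).
  replace (p * (p * 1)) with (Rabs p ^ 2) by (rewrite pow2_abs; simpl; ring).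
  set (t := Rabs p).
  assert (Ht : t = - p) by (unfold t; apply Rabs_left; assert (0 < C / eps) by (apply Rdiv_lt_0_compat; auto); lra).
  assert (Ht1 : 1 + C / eps < t) by lra.
  assert (HCe : 0 < C / eps) by (apply Rdiv_lt_0_compat; auto).
  assert (Ht0 : 1 <= t) by lra.
  assert (He : c ^ j * t ^ (2 * j) / INR (Factorial.fact j) <= exp (c * t ^ 2)).
  { rewrite pow_mult, <- Rpow_mult_distr. apply exp_pow_bound.
    apply Rmult_le_pos; [lra| apply pow_le; lra]. }
  assert (Hx : exp (- (c * t ^ 2)) = / exp (c * t ^ 2)) by apply exp_Ropp.
  rewrite Hx.
  assert (HE : 0 < exp (c * t ^ 2)) by apply exp_pos.
  apply (Rmult_lt_reg_r (exp (c * t ^ 2))); auto.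
  rewrite Rmult_assoc, Rinv_l by lra. rewrite Rmult_1_r.
  assert (Hsplit : t ^ (2 * j) = t ^ k * t * t ^ j).
  { unfold j. replace (2 * S k)%nat with (k + 1 + S k)%nat by lia.
    rewrite !pow_add. simpl. ring. }
  assert (Htj : 1 <= t ^ j) by (apply pow_R1_Rle; lra).
  assert (Htk : 0 < t ^ k) by (apply pow_lt; lra).
  assert (HCt : C < eps * t).
  { apply (Rmult_lt_reg_r (/ eps)). apply Rinv_0_lt_compat; auto.
    replace (eps * t * / eps) with t by (field; lra). unfold Rdiv in Ht1. lra. }
  assert (Hfact : c ^ j * t ^ (2 * j) / INR (Factorial.fact j) = t ^ (2 * j) / C).
  { unfold C. assert (0 < INR (Factorial.fact j)) by apply INR_fact_lt_0.
    assert (0 < c ^ j) by (apply pow_lt; auto). field. lra. }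
  rewrite Hfact, Hsplit in He.
  apply Rlt_le_trans with (eps * (t ^ k * t * t ^ j / C)); [|apply Rmult_le_compat_l; lra].
  replace (eps * (t ^ k * t * t ^ j / C)) with (t ^ k * ((eps * t) / C) * t ^ j) by (field; lra).
  assert (1 < eps * t / C).
  { apply (Rmult_lt_reg_r C); auto. replace (eps * t / C * C) with (eps * t) by (field; lra). lra. }
  assert (t ^ k < t ^ k * (eps * t / C)).
  { rewrite <- (Rmult_1_r (t ^ k)) at 1. apply Rmult_lt_compat_l; auto. }
  assert (0 < t ^ k * (eps * t / C)) by lra.
  apply Rlt_le_trans with (t ^ k * (eps * t / C)); auto.
  rewrite <- (Rmult_1_r (t ^ k * (eps * t / C))) at 1. apply Rmult_le_compat_l; lra.
Qed.

Lemma FL_scal {T} (F : (T -> Prop) -> Prop) (FF : Filter F) (f : T -> R) (c l : R) :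
  filterlim f F (locally l) -> filterlim (fun x => c * f x) F (locally (c * l)).
Proof.
  intros H. eapply filterlim_comp; [exact H|]. apply (filterlim_scal_r (K:=R_AbsRing) (V:=R_NormedModule) c l).
Qed.

Lemma FL_plus {T} (F : (T -> Prop) -> Prop) (FF : Filter F) (f g : T -> R) (l1 l2 : R) :
  filterlim f F (locally l1) -> filterlim g F (locally l2) ->
  filterlim (fun x => f x + g x) F (locally (l1 + l2)).
Proof.
  intros H1 H2. eapply filterlim_comp_2; [exact H1|exact H2|].
  apply (filterlim_plus (K:=R_AbsRing) (V:=R_NormedModule) l1 l2).
Qed.

Lemma FL_ext {T} (F : (T -> Prop) -> Prop) (FF : Filter F) (f g : T -> R) (l : R) :
  F (fun x => f x = g x) -> filterlim f F (locally l) -> filterlim g F (locally l).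
Proof.
  intros He H. eapply filterlim_ext_loc; [exact He| exact H].
Qed.

Lemma exp_le_exp' x y : x <= y -> exp x <= exp y.
Proof. intros [H|H]; [apply Rlt_le, exp_increasing; auto| subst; lra]. Qed.

Definition km (m : nat) (u : R) := u ^ (2 * m) * exp (- (u ^ 2)).

Lemma km_cont m u : continuous (km m) u.
Proof. apply (ex_derive_continuous (K:=R_AbsRing) (V:=R_NormedModule)). unfold km. auto_derive. auto. Qed.

Lemma km_pos m u : 0 <= km m u.
Proof.
  unfold km. apply Rmult_le_pos; [|apply Rlt_le, exp_pos].
  rewrite pow_mult. apply pow_le. nra.
Qed.

Lemma km_bound m b : 0 <= b ->
  RInt (km m) 0 b <= 2 ^ m * INR (Factorial.fact m) * exp (1/2).
Proof.
  intros Hb. set (D := 2 ^ m * INR (Factorial.fact m) * exp (1/2)).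
  assert (HD : 0 < D).
  { unfold D. apply Rmult_lt_0_compat; [apply Rmult_lt_0_compat|apply exp_pos].
    apply pow_lt; lra. apply INR_fact_lt_0. }
  assert (Hpt : forall u, 0 <= u -> km m u <= D * exp (- u)).
  { intros u Hu. unfold km, D.
    assert (H1 := exp_pow_bound (u ^ 2 / 2) m).
    assert (H0 : 0 <= u ^ 2 / 2) by nra.
    specialize (H1 H0).
    assert (Hf := INR_fact_lt_0 m).
    assert (H2 : u ^ (2 * m) <= 2 ^ m * INR (Factorial.fact m) * exp (u ^ 2 / 2)).
    { rewrite pow_mult.
      replace ((u ^ 2) ^ m) with (2 ^ m * (u ^ 2 / 2) ^ m).
      2:{ rewrite <- Rpow_mult_distr. f_equal. field. }
      assert (0 < 2 ^ m) by (apply pow_lt; lra).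
      rewrite Rmult_assoc. apply Rmult_le_compat_l; [lra|].
      apply (Rmult_le_reg_r (/ INR (Factorial.fact m))). apply Rinv_0_lt_compat; auto.
      replace (INR (Factorial.fact m) * exp (u ^ 2 / 2) * / INR (Factorial.fact m)) with (exp (u ^ 2 / 2)) by (field; lra).
      exact H1. }
    assert (H3 : exp (u ^ 2 / 2) * exp (- u ^ 2) <= exp (1/2) * exp (- u)).
    { rewrite <- !exp_plus. apply exp_le_exp'. assert (0 <= (u-1)*(u-1)) by apply Rle_0_sqr. simpl. lra. }
    apply Rle_trans with (2 ^ m * INR (Factorial.fact m) * exp (u ^ 2 / 2) * exp (- u ^ 2)).
    - apply Rmult_le_compat_r; auto. apply Rlt_le, exp_pos.
    - assert (0 < 2 ^ m * INR (Factorial.fact m)) by (apply Rmult_lt_0_compat; auto; apply pow_lt; lra).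
      replace (2 ^ m * INR (Factorial.fact m) * exp (u ^ 2 / 2) * exp (- u ^ 2))
        with (2 ^ m * INR (Factorial.fact m) * (exp (u ^ 2 / 2) * exp (- u ^ 2))) by ring.
      replace (2 ^ m * INR (Factorial.fact m) * exp (1 / 2) * exp (- u))
        with (2 ^ m * INR (Factorial.fact m) * (exp (1 / 2) * exp (- u))) by ring.
      apply Rmult_le_compat_l; lra. }
  assert (HI : is_RInt (fun u => D * exp (- u)) 0 b (D * (1 - exp (- b)))).
  { assert (Heq : minus ((fun u => - D * exp (- u)) b) ((fun u => - D * exp (- u)) 0) = D * (1 - exp (- b))).
    { unfold minus, plus, opp; simpl. rewrite Ropp_0, exp_0. ring. }
    assert (HI0 : is_RInt (fun u => D * exp (- u)) 0 b (minus ((fun u => - D * exp (- u)) b) ((fun u => - D * exp (- u)) 0))).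
    { apply (is_RInt_derive (V:=R_CompleteNormedModule) (fun u => - D * exp (- u)) (fun u => D * exp (-u))).
      - intros x _. auto_derive; auto. ring.
      - intros x _. apply (ex_derive_continuous (K:=R_AbsRing) (V:=R_NormedModule)). auto_derive. auto. }
    cbv beta in HI0, Heq. rewrite Heq in HI0. exact HI0. }
  apply Rle_trans with (D * (1 - exp (- b))).
  - rewrite <- (is_RInt_unique _ _ _ _ HI). apply RInt_le; auto.
    + apply (ex_RInt_continuous (V:=R_CompleteNormedModule)). intros; apply km_cont.
    + eexists; exact HI.
    + intros x Hx. apply Hpt. lra.
  - assert (0 < exp (- b)) by apply exp_pos. nra.
Qed.

Lemma at_point_proper (a : R) : ProperFilter' (at_point a).
Proof.
  constructor.
  - intros H. exact H.
  - constructor; unfold at_point; auto.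
Qed.

Lemma Rbar_proper (x : Rbar) : ProperFilter' (Rbar_locally x).
Proof. apply Proper_StrongProper, Rbar_locally_filter. Qed.

Definition K (m : nat) := RInt_gen (km m) (at_point 0) (Rbar_locally p_infty).

Lemma K_spec m :
  is_RInt_gen (km m) (at_point 0) (Rbar_locally p_infty) (K m) /\
  filterlim (fun b => RInt (km m) 0 b) (Rbar_locally p_infty) (locally (K m)) /\
  (forall b, 0 <= b -> RInt (km m) 0 b <= K m).
Proof.
  destruct (G3 (km m) 0 (2 ^ m * INR (Factorial.fact m) * exp (1/2))) as [l [Hl1 Hl2]].
  - intros; apply km_cont.
  - intros; apply km_pos.
  - intros; apply km_bound; auto.
  - assert (Hg : is_RInt_gen (km m) (at_point 0) (Rbar_locally p_infty) l).
    { apply G2; [apply Rbar_locally_filter| |exact Hl1]. exists 0. intros y Hy.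
      apply (ex_RInt_continuous (V:=R_CompleteNormedModule)). intros; apply km_cont. }
    assert (HK : K m = l).
    { unfold K. apply is_RInt_gen_unique; auto. }
    rewrite HK. auto.
Qed.

Lemma K_pos m : 0 < K m.
Proof.
  destruct (K_spec m) as [_ [_ H]].
  apply Rlt_le_trans with (RInt (km m) 0 1); [|apply H; lra].
  apply RInt_gt_0; [lra| |intros; apply km_cont].
  intros x Hx. unfold km. apply Rmult_lt_0_compat; [|apply exp_pos].
  apply pow_lt; lra.
Qed.

Definition fp (s : R) (m : nat) (p : R) := p ^ (2 * m) * exp (- (p ^ 2 / s ^ 2)).

Lemma fp_cont s m p : 0 < s -> continuous (fp s m) p.
Proof.
  intros Hs. apply (ex_derive_continuous (K:=R_AbsRing) (V:=R_NormedModule)).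
  unfold fp. auto_derive. auto.
Qed.

Lemma fp_eq s m x : 0 < s ->
  RInt (fp s m) x 0 = s ^ (2 * m + 1) * RInt (km m) 0 (- / s * x + 0).
Proof.
  intros Hs.
  assert (Hex : ex_RInt (km m) (- / s * x + 0) (- / s * 0 + 0)).
  { apply (ex_RInt_continuous (V:=R_CompleteNormedModule)). intros; apply km_cont. }
  assert (H1 := is_RInt_comp_lin (km m) (- / s) 0 x 0 _ (RInt_correct _ _ _ Hex)).
  assert (Hpt : forall y, fp s m y = scal (- s ^ (2 * m + 1)) (scal (- / s) (km m (- / s * y + 0)))).
  { intros y. unfold fp, km. do 2 change (scal ?a ?b) with (a * b).
    replace ((- / s * y + 0) ^ (2 * m)) with (y ^ (2 * m) * / s ^ (2 * m)).
    2:{ symmetry. rewrite pow_mult. replace ((- / s * y + 0) ^ 2) with (y ^ 2 * (/ s) ^ 2) by ring.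
        rewrite Rpow_mult_distr, <- !pow_mult, pow_inv. reflexivity. }
    replace (- (- / s * y + 0) ^ 2) with (- (y ^ 2 / s ^ 2)) by (field; lra).
    rewrite pow_add.
    assert (0 < s ^ (2 * m)) by (apply pow_lt; lra).
    field. lra. }
  rewrite (RInt_ext _ _ _ _ (fun y _ => Hpt y)).
  rewrite (RInt_scal (V:=R_CompleteNormedModule)) by (eexists; exact H1).
  assert (Hval : RInt (fun y => scal (- / s) (km m (- / s * y + 0))) x 0 = RInt (km m) (- / s * x + 0) (- / s * 0 + 0)) by (apply is_RInt_unique; exact H1). rewrite Hval.
  replace (- / s * 0 + 0) with 0 in * by ring.
  rewrite <- (opp_RInt_swap (V:=R_CompleteNormedModule) _ _ _ Hex).
  change (scal ?a ?b) with (a * b). change (opp ?a) with (- a). rewrite <- Ropp_mult_distr_r, <- Ropp_mult_distr_l. reflexivity.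
Qed.

Lemma lin_to_pinf s : 0 < s ->
  filterlim (fun x => - / s * x + 0) (Rbar_locally m_infty) (Rbar_locally p_infty).
Proof.
  intros Hs P [M HM]. exists (- M * s). intros x Hx. apply HM.
  apply (Rmult_lt_reg_r s); auto.
  replace ((- / s * x + 0) * s) with (- x) by (field; lra). lra.
Qed.

Lemma J_spec s m : 0 < s ->
  is_RInt_gen (fp s m) (Rbar_locally m_infty) (at_point 0) (s ^ (2 * m + 1) * K m).
Proof.
  intros Hs. apply G1.
  - apply Rbar_locally_filter.
  - apply filter_forall. intros x.
    apply (ex_RInt_continuous (V:=R_CompleteNormedModule)). intros; apply fp_cont; auto.
  - eapply FL_ext. apply Rbar_locally_filter.
    apply filter_forall. intros x. symmetry. apply fp_eq; auto.
    apply FL_scal. apply Rbar_locally_filter.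
    eapply filterlim_comp. apply lin_to_pinf; auto.
    apply (K_spec m).
Qed.

Definition hG (n : nat) (t : R) := Rpower t (INR n + 1/2 - 1) * exp (- t).

Lemma hG_cont n t : 0 < t -> continuous (hG n) t.
Proof.
  intros Ht. apply (ex_derive_continuous (K:=R_AbsRing) (V:=R_NormedModule)).
  unfold hG, Rpower. auto_derive. auto.
Qed.

Lemma hG_sub n y : 0 < y -> 2 * y * hG n (y ^ 2) = 2 * km n y.
Proof.
  intros Hy. unfold hG, km, Rpower.
  rewrite ln_pow by auto.
  assert (E : exp (INR (2 * n) * ln y) = y ^ (2 * n)).
  { apply (Rpower_pow (2 * n) y Hy). }
  rewrite <- E. rewrite <- (exp_ln y Hy) at 1.
  replace (2 * exp (ln y) * (exp ((INR n + 1 / 2 - 1) * (INR 2 * ln y)) * exp (- y ^ 2)))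
    with (2 * (exp (ln y + (INR n + 1 / 2 - 1) * (INR 2 * ln y)) * exp (- y ^ 2)))
    by (rewrite exp_plus; ring).
  rewrite mult_INR. simpl INR. do 3 f_equal. field.
Qed.

Lemma hG_RInt n a b : 0 < a -> 0 < b ->
  RInt (hG n) a b = 2 * RInt (km n) (sqrt a) (sqrt b).
Proof.
  intros Ha Hb.
  assert (Hsa := sqrt_lt_R0 a Ha). assert (Hsb := sqrt_lt_R0 b Hb).
  assert (Hc := RInt_comp (V:=R_CompleteNormedModule) (hG n) (fun u => u ^ 2) (fun u => 2 * u) (sqrt a) (sqrt b)).
  cbv beta in Hc. rewrite !pow2_sqrt in Hc by lra.
  rewrite <- Hc.
  - rewrite <- (RInt_scal (V:=R_CompleteNormedModule)).
    2:{ apply (ex_RInt_continuous (V:=R_CompleteNormedModule)). intros; apply km_cont. }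
    apply RInt_ext. intros x Hx.
    assert (0 < x).
    { destruct Hx as [Hx _]. eapply Rle_lt_trans; [|exact Hx].
      unfold Rmin; destruct (Rle_dec _ _); lra. }
    change (scal ?a ?b) with (a * b). apply hG_sub; auto.
  - intros x Hx. apply hG_cont.
    assert (0 < x).
    { destruct Hx as [Hx _]. eapply Rlt_le_trans; [|exact Hx].
      unfold Rmin; destruct (Rle_dec _ _); lra. }
    apply pow_lt; auto.
  - intros x Hx. split.
    + auto_derive; auto. ring.
    + apply (ex_derive_continuous (K:=R_AbsRing) (V:=R_NormedModule)). auto_derive. auto.
Qed.

Lemma ex_RInt_km m a b : ex_RInt (km m) a b.
Proof. apply (ex_RInt_continuous (V:=R_CompleteNormedModule)). intros; apply km_cont. Qed.

Lemma ex_RInt_hG n a b : 0 < a -> 0 < b -> ex_RInt (hG n) a b.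
Proof.
  intros Ha Hb. apply (ex_RInt_continuous (V:=R_CompleteNormedModule)). intros z Hz.
  apply hG_cont. destruct Hz as [Hz _]. eapply Rlt_le_trans; [|exact Hz].
  unfold Rmin; destruct (Rle_dec _ _); lra.
Qed.

Lemma sqrt_at_right : filterlim sqrt (at_right 0) (locally 0).
Proof.
  apply (filterlim_filter_le_1 (F := locally 0)).  
  2:{ assert (H := continuous_sqrt 0). unfold continuous in H; rewrite sqrt_0 in H. exact H. }
  intros P [d Hd]. exists d. intros y Hy _. apply Hd; auto.
Qed.

Lemma Gamma_val n : Gamma (INR n + 1/2) = 2 * K n.
Proof.
  unfold Gamma. change (fun t => Rpower t (INR n + 1 / 2 - 1) * exp (- t)) with (hG n).
  apply is_RInt_gen_unique.
  replace (2 * K n) with (plus (2 * RInt (km n) 0 1) (2 * (K n + - RInt (km n) 0 1)))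
    by (unfold plus; simpl; ring).
  assert (H : is_RInt_gen (V:=R_NormedModule) (hG n) (at_right 0) (Rbar_locally p_infty)
      (plus (2 * RInt (km n) 0 1) (2 * (K n + - RInt (km n) 0 1)))).
  2: exact H.
  apply (is_RInt_gen_Chasles (V:=R_NormedModule) (Fa:=at_right 0) (Fc:=Rbar_locally p_infty) (hG n) 1).
  - apply G1. apply at_right_proper_filter.
    + exists (mkposreal 1 Rlt_0_1). intros y _ Hy. apply ex_RInt_hG; lra.
    + apply (FL_ext _ _ (fun x => 2 * RInt (km n) (sqrt x) 1)).
      { exists (mkposreal 1 Rlt_0_1). intros y _ Hy. simpl in Hy.
        rewrite hG_RInt by lra. rewrite sqrt_1. reflexivity. }
      apply FL_scal. apply at_right_proper_filter.
      apply (filterlim_comp _ _ _ sqrt (fun u => RInt (km n) u 1) _ (locally 0)). apply sqrt_at_right.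
      apply (ex_derive_continuous (K:=R_AbsRing) (V:=R_NormedModule) (fun u => RInt (km n) u 1)).
      eexists. apply (is_derive_RInt' (V:=R_NormedModule) (km n) (fun u => RInt (km n) u 1) 0 1).
      * apply filter_forall. intros x. apply (RInt_correct (V:=R_CompleteNormedModule)), ex_RInt_km.
      * apply km_cont.
  - apply G2. apply Rbar_locally_filter.
    + exists 0. intros y Hy. apply ex_RInt_hG; lra.
    + apply (FL_ext _ _ (fun y => 2 * (RInt (km n) 0 (sqrt y) + - RInt (km n) 0 1))).
      { exists 0. intros y Hy. rewrite hG_RInt by lra. rewrite sqrt_1.
        rewrite <- (RInt_Chasles (km n) 0 1 (sqrt y)) by apply ex_RInt_km.
        change (plus ?a ?b) with (a + b). f_equal. ring. }
      apply FL_scal. apply Rbar_locally_filter.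
      apply FL_plus. apply Rbar_locally_filter.
      * eapply filterlim_comp. apply filterlim_sqrt_p. apply (K_spec n).
      * apply filterlim_const.
Qed.

Lemma left_int (f g Q : R -> R) (l : R) :
  is_RInt_gen g (Rbar_locally m_infty) (at_point 0) l ->
  (forall x, ex_derive Q x) -> (forall x, continuous (Derive Q) x) ->
  filterlim Q (Rbar_locally m_infty) (locally 0) -> Q 0 = 0 ->
  (forall p, p < 0 -> f p = g p + Derive Q p) ->
  is_RInt_gen f (Rbar_locally m_infty) (at_point 0) l.
Proof.
  intros Hg Hd Hc HQ HQ0 Hf.
  assert (HD : is_RInt_gen (Derive Q) (Rbar_locally m_infty) (at_point 0) (Q 0 - 0)).
  { apply is_RInt_gen_Derive.
    - apply Filter_prod with (fun _ => True) (fun _ => True); [exists 0; auto| unfold at_point; auto|].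
      intros; apply Hd.
    - apply Filter_prod with (fun _ => True) (fun _ => True); [exists 0; auto| unfold at_point; auto|].
      intros; apply Hc.
    - exact HQ.
    - intros P HP. unfold filtermap, at_point. apply locally_singleton. exact HP. }
  rewrite HQ0, Rminus_0_r in HD.
  assert (Hs := is_RInt_gen_plus _ _ _ _ Hg HD).
  replace l with (plus l 0) by (unfold plus; simpl; ring).
  eapply is_RInt_gen_ext; [|exact Hs].
  apply Filter_prod with (fun a => a < 0) (fun b => b = 0); [exists 0; auto| unfold at_point; auto|].
  intros a b Ha -> x Hx. simpl in Hx. unfold Rmin, Rmax in Hx.
  destruct (Rle_dec a 0); [|lra]. rewrite Hf by lra. reflexivity.
Qed.

Lemma zero_right (f : R -> R) :
  (forall p, 0 < p -> f p = 0) -> is_RInt_gen f (at_point 0) (Rbar_locally p_infty) 0.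
Proof.
  intros Hf. apply G2. apply Rbar_locally_filter.
  - exists 0. intros y Hy. apply (ex_RInt_ext (fun _ => 0)).
    + intros x Hx. unfold Rmin, Rmax in Hx. destruct (Rle_dec 0 y); [|lra]. rewrite Hf; auto; lra.
    + apply ex_RInt_const.
  - apply (FL_ext _ _ (fun _ => 0)).
    + exists 0. intros y Hy. rewrite (RInt_ext f (fun _ => 0)).
      * rewrite RInt_const. change (scal ?a ?b) with (a * b). ring.
      * intros x Hx. unfold Rmin, Rmax in Hx. destruct (Rle_dec 0 y); [|lra]. apply Hf; lra.
    + apply filterlim_const.
Qed.

Lemma whole_line (f : R -> R) l :
  is_RInt_gen f (Rbar_locally m_infty) (at_point 0) l ->
  (forall p, 0 < p -> f p = 0) ->
  int_R f = l /\ ex_int_R f.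
Proof.
  intros H1 H2.
  assert (H := is_RInt_gen_Chasles _ _ _ _ H1 (zero_right f H2)).
  change (plus l 0) with (l + 0) in H. rewrite Rplus_0_r in H.
  split.
  - apply is_RInt_gen_unique; exact H.
  - exists l; exact H.
Qed.

Lemma locally_neg (p : R) : p < 0 -> locally p (fun q => q < 0).
Proof.
  intros Hp. assert (H : 0 < - p) by lra. exists (mkposreal _ H).
  intros q Hq. unfold ball in Hq; simpl in Hq; unfold AbsRing_ball, abs, minus, plus, opp in Hq; simpl in Hq.
  apply Rabs_def2 in Hq. lra.
Qed.

Lemma locally_pos (p : R) : 0 < p -> locally p (fun q => 0 < q).
Proof.
  intros Hp. exists (mkposreal _ Hp).
  intros q Hq. unfold ball in Hq; simpl in Hq; unfold AbsRing_ball, abs, minus, plus, opp in Hq; simpl in Hq.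
  apply Rabs_def2 in Hq. lra.
Qed.

Ltac dsimpl m :=
  cbn [pow pred] in *;
  try change (match m with 0%nat => 1 | S _ => INR m + 1 end) with (INR (S m)) in *;
  rewrite ?S_INR in *;
  unfold Rdiv in *;
  try (match goal with |- ?a = ?b => change (@eq R a b) end).

Definition psia (s N : R) (m : nat) (p : R) :=
  N * p ^ (S (S m)) * exp (- p ^ 2 / (2 * s ^ 2)).
Definition dpsia (s N : R) (m : nat) (p : R) :=
  N * ((INR m + 2) * p ^ (S m) - p ^ (S (S (S m))) / s ^ 2) * exp (- p ^ 2 / (2 * s ^ 2)).
Definition ddpsia (s N : R) (m : nat) (p : R) :=
  N * ((INR m + 2) * (INR m + 1) * p ^ m - (2 * INR m + 5) * p ^ (S (S m)) / s ^ 2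
       + p ^ (S (S (S (S m)))) / s ^ 4) * exp (- p ^ 2 / (2 * s ^ 2)).

Lemma d_psia (s N : R) (m : nat) (p : R) : 0 < s -> is_derive (psia s N m) p (dpsia s N m p).
Proof.
  intros Hs. unfold psia, dpsia. auto_derive.
  - auto.
  - dsimpl m. field. lra.
Qed.

Lemma d_dpsia (s N : R) (m : nat) (p : R) : 0 < s -> is_derive (dpsia s N m) p (ddpsia s N m p).
Proof.
  intros Hs. unfold dpsia, ddpsia. auto_derive.
  - repeat split; auto; apply pow_nonzero; lra.
  - dsimpl m. field. lra.
Qed.

Lemma psi_neg (s : R) (m : nat) (p : R) : p < 0 ->
  psi s (S (S m)) p = psia s (N_G s (S (S m))) m p.
Proof.
  intros Hp. unfold psi, psia, Heaviside.
  destruct (Rlt_dec 0 (- p)); [ring | lra].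
Qed.

Lemma psi_nonneg (s : R) (n : nat) (p : R) : 0 <= p -> psi s n p = 0.
Proof.
  intros Hp. unfold psi, Heaviside.
  destruct (Rlt_dec 0 (- p)); [lra | ring].
Qed.

Lemma Dpsi_neg (s : R) (m : nat) (p : R) : 0 < s -> p < 0 ->
  Derive (psi s (S (S m))) p = dpsia s (N_G s (S (S m))) m p.
Proof.
  intros Hs Hp.
  rewrite (Derive_ext_loc _ (psia s (N_G s (S (S m))) m)).
  - apply is_derive_unique, d_psia; auto.
  - eapply filter_imp; [|apply locally_neg; exact Hp].
    intros q Hq. apply psi_neg; auto.
Qed.

Lemma Dpsi_pos (s : R) (n : nat) (p : R) : 0 < p -> Derive (psi s n) p = 0.
Proof.
  intros Hp.
  rewrite (Derive_ext_loc _ (fun _ => 0)).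
  - apply Derive_const.
  - eapply filter_imp; [|apply locally_pos; exact Hp].
    intros q Hq. apply psi_nonneg; lra.
Qed.

Lemma DDpsi_neg (s : R) (m : nat) (p : R) : 0 < s -> p < 0 ->
  Derive (Derive (psi s (S (S m)))) p = ddpsia s (N_G s (S (S m))) m p.
Proof.
  intros Hs Hp.
  rewrite (Derive_ext_loc _ (dpsia s (N_G s (S (S m))) m)).
  - apply is_derive_unique, d_dpsia; auto.
  - eapply filter_imp; [|apply locally_neg; exact Hp].
    intros q Hq. apply Dpsi_neg; auto.
Qed.

Lemma DDpsi_pos (s : R) (n : nat) (p : R) : 0 < p -> Derive (Derive (psi s n)) p = 0.
Proof.
  intros Hp.
  rewrite (Derive_ext_loc _ (fun _ => 0)).
  - apply Derive_const.
  - eapply filter_imp; [|apply locally_pos; exact Hp].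
    intros q Hq. apply Dpsi_pos; lra.
Qed.

Definition Qf (s A B C : R) (m : nat) (p : R) :=
  (A * p ^ 3 + B * p ^ 2 + C * p) * (p ^ (S m) * p ^ (S m)) * exp (- (p ^ 2 / s ^ 2)).
Definition dQf (s A B C : R) (m : nat) (p : R) :=
  ((3 * A * p ^ 2 + 2 * B * p + C) * (p ^ (S m) * p ^ (S m))
   + (A * p ^ 3 + B * p ^ 2 + C * p) * (2 * (INR m + 1) * p ^ m * p ^ (S m))
   - (A * p ^ 3 + B * p ^ 2 + C * p) * (p ^ (S m) * p ^ (S m)) * (2 * p / s ^ 2))
  * exp (- (p ^ 2 / s ^ 2)).

Lemma d_Qf (s A B C : R) (m : nat) (p : R) : 0 < s -> is_derive (Qf s A B C m) p (dQf s A B C m p).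
Proof.
  intros Hs. unfold Qf, dQf. auto_derive.
  - auto.
  - dsimpl m. field. lra.
Qed.

Lemma Q_props (s A B C : R) (m : nat) : 0 < s ->
  (forall x, ex_derive (Qf s A B C m) x) /\
  (forall x, continuous (Derive (Qf s A B C m)) x) /\
  filterlim (Qf s A B C m) (Rbar_locally m_infty) (locally 0) /\
  Qf s A B C m 0 = 0.
Proof.
  intros Hs. split; [|split; [|split]].
  - intros x. eexists. apply d_Qf; auto.
  - intros x. apply (continuous_ext (dQf s A B C m)).
    + intros y. symmetry. apply is_derive_unique, d_Qf; auto.
    + apply (ex_derive_continuous (K:=R_AbsRing) (V:=R_NormedModule)).
      unfold dQf. auto_derive. auto.
  - assert (Hc : 0 < / s ^ 2) by (apply Rinv_0_lt_compat, pow_lt; auto).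
    apply (FL_ext _ _ (fun p => A * (p ^ (2 * m + 5) * exp (- (/ s ^ 2 * p ^ 2)))
       + (B * (p ^ (2 * m + 4) * exp (- (/ s ^ 2 * p ^ 2)))
       + C * (p ^ (2 * m + 3) * exp (- (/ s ^ 2 * p ^ 2)))))).
    + apply filter_forall. intros p. unfold Qf.
      replace (p ^ (2 * m + 5)) with (p ^ 3 * (p ^ (S m) * p ^ (S m))) by (rewrite <- !pow_add; f_equal; lia).
      replace (p ^ (2 * m + 4)) with (p ^ 2 * (p ^ (S m) * p ^ (S m))) by (rewrite <- !pow_add; f_equal; lia).
      replace (p ^ (2 * m + 3)) with (p * (p ^ (S m) * p ^ (S m))) by (rewrite <- !pow_add; rewrite <- (pow_1 p) at 1; rewrite <- pow_add; f_equal; lia).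
      replace (- (/ s ^ 2 * p ^ 2)) with (- (p ^ 2 / s ^ 2)) by (unfold Rdiv; ring).
      ring.
    + replace 0 with (A * 0 + (B * 0 + C * 0)) by ring.
      apply FL_plus; [apply Rbar_locally_filter| |].
      * apply FL_scal; [apply Rbar_locally_filter|]. apply PL; auto.
      * apply FL_plus; [apply Rbar_locally_filter| |];
          (apply FL_scal; [apply Rbar_locally_filter|]; apply PL; auto).
  - unfold Qf. ring.
Qed.

Lemma J_scal (s c : R) (m : nat) : 0 < s ->
  is_RInt_gen (fun p => c * fp s m p) (Rbar_locally m_infty) (at_point 0) (c * (s ^ (2 * m + 1) * K m)).
Proof.
  intros Hs. exact (is_RInt_gen_scal _ c _ (J_spec s m Hs)).
Qed.

Lemma EE (s p : R) : 0 < s ->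
  exp (- p ^ 2 / (2 * s ^ 2)) = exp (- (p ^ 2 / s ^ 2)) * / exp (- p ^ 2 / (2 * s ^ 2)).
Proof.
  intros Hs. assert (H0 := exp_pos (- p ^ 2 / (2 * s ^ 2))).
  replace (exp (- (p ^ 2 / s ^ 2))) with (exp (- p ^ 2 / (2 * s ^ 2)) * exp (- p ^ 2 / (2 * s ^ 2))).
  - field. lra.
  - rewrite <- exp_plus. f_equal. field. lra.
Qed.

Lemma EE2 (s p : R) : 0 < s ->
  exp (- (p ^ 2 / s ^ 2)) = exp (- p ^ 2 / (2 * s ^ 2)) * exp (- p ^ 2 / (2 * s ^ 2)).
Proof.
  intros Hs. rewrite <- exp_plus. f_equal. field. lra.
Qed.

Lemma pow2n (p : R) (n : nat) : p ^ (2 * n) = p ^ n * p ^ n.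
Proof. rewrite <- pow_add. f_equal. lia. Qed.

Ltac ident_tac m :=
  unfold psia, dpsia, ddpsia, dQf, fp; rewrite ?pow2n; rewrite ?EE2 by assumption;
  cbn [pow pred];
  try change (match m with 0%nat => 1 | S _ => INR m + 1 end) with (INR (S m));
  rewrite ?S_INR; unfold Rdiv.

Theorem mainTheorem3 (alpha hbar sigma : R) (n : nat) :
  0 < alpha -> 0 < hbar -> 0 < sigma -> (2 <= n)%nat ->
  int_R (fun p => (psi sigma n p) ^ 2) = 1 /\
  (forall tau, ex_int_R (A_integrand1 alpha sigma n tau)) /\
  ex_int_R (A_integrand2 sigma n) /\
  (forall tau, A_n alpha hbar sigma n 0 <= A_n alpha hbar sigma n tau) /\
  A_n alpha hbar sigma n 0
    = 4 * PI * hbar ^ 2 / sigma ^ 2 * ((4 * INR n - 1) / (4 * INR n - 2)) /\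
  expect_a hbar sigma n = 0%C /\
  Im (Delta_a_sq hbar sigma n) = 0 /\
  A_n alpha hbar sigma n 0 = 4 * PI * Re (Delta_a_sq hbar sigma n) /\
  sqrt (Re (Delta_a_sq hbar sigma n))
    = hbar / sigma * sqrt ((4 * INR n - 1) / (4 * INR n - 2)).
Proof.
  intros Ha Hh Hs Hn.
  destruct n as [|[|m]]; [lia|lia|]. clear Hn.
  assert (HK := K_pos (S (S m))). assert (HKm := K_pos m).
  assert (Hm0 : 0 <= INR m) by apply pos_INR.
  assert (Hsp : 0 < sigma ^ (2 * S (S m) + 1)) by (apply pow_lt; auto).
  assert (HN2 : N_G sigma (S (S m)) ^ 2 * (sigma ^ (2 * S (S m) + 1) * K (S (S m))) = 1).
  { unfold N_G. rewrite pow2_sqrt.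
    - rewrite Gamma_val. field. lra.
    - rewrite Gamma_val. apply Rlt_le, Rdiv_lt_0_compat; [lra|]. nra. }
  remember (N_G sigma (S (S m))) as N eqn:HNdef.
  assert (I1 : is_RInt_gen (fun p => psi sigma (S (S m)) p ^ 2) (Rbar_locally m_infty) (at_point 0) 1).
  { destruct (Q_props sigma 0 0 0 m Hs) as [Qd [Qc [Ql Q0]]].
    rewrite <- HN2.
    apply (left_int _ (fun p => N ^ 2 * fp sigma (S (S m)) p) (Qf sigma 0 0 0 m)); auto.
    - apply J_scal; auto.
    - intros p Hp. rewrite psi_neg by auto. rewrite (is_derive_unique _ _ _ (d_Qf sigma 0 0 0 m p Hs)).
      rewrite <- HNdef. ident_tac m. field. lra. }
  assert (Hm3 : 0 < 2 * INR m + 3) by lra.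
  set (c := (4 * INR m + 7) / ((4 * INR m + 6) * sigma ^ 2)).
  assert (I2 : is_RInt_gen (A_integrand2 sigma (S (S m))) (Rbar_locally m_infty) (at_point 0) c).
  { set (A1 := N ^ 2 * (- 1 / (2 * sigma ^ 2))).
    set (C1 := N ^ 2 * ((INR m + 2) ^ 2 / (2 * INR m + 3))).
    destruct (Q_props sigma A1 0 C1 m Hs) as [Qd [Qc [Ql Q0]]].
    replace c with ((c * N ^ 2) * (sigma ^ (2 * S (S m) + 1) * K (S (S m)))) by
      (rewrite Rmult_assoc, HN2; ring).
    apply (left_int _ (fun p => (c * N ^ 2) * fp sigma (S (S m)) p) (Qf sigma A1 0 C1 m)); auto.
    - apply J_scal; auto.
    - intros p Hp. unfold A_integrand2. rewrite Dpsi_neg by auto.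
      rewrite (is_derive_unique _ _ _ (d_Qf sigma A1 0 C1 m p Hs)).
      rewrite <- HNdef. unfold c, A1, C1. ident_tac m. field. lra. }
  assert (I3 : is_RInt_gen (fun p => psi sigma (S (S m)) p * Derive (psi sigma (S (S m))) p)
      (Rbar_locally m_infty) (at_point 0) 0).
  { set (B2 := N ^ 2 / 2).
    destruct (Q_props sigma 0 B2 0 m Hs) as [Qd [Qc [Ql Q0]]].
    assert (H : is_RInt_gen (fun p => psi sigma (S (S m)) p * Derive (psi sigma (S (S m))) p)
      (Rbar_locally m_infty) (at_point 0) (0 * (sigma ^ (2 * S (S m) + 1) * K (S (S m))))).
    2:{ rewrite Rmult_0_l in H. exact H. }
    apply (left_int _ (fun p => 0 * fp sigma (S (S m)) p) (Qf sigma 0 B2 0 m)); auto.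
    - apply J_scal; auto.
    - intros p Hp. rewrite psi_neg, Dpsi_neg by auto.
      rewrite (is_derive_unique _ _ _ (d_Qf sigma 0 B2 0 m p Hs)).
      rewrite <- HNdef. unfold B2. ident_tac m. field. lra. }
  assert (I4 : is_RInt_gen (fun p => psi sigma (S (S m)) p * Derive (Derive (psi sigma (S (S m)))) p)
      (Rbar_locally m_infty) (at_point 0) (- c)).
  { set (A3 := N ^ 2 * (- 1 / (2 * sigma ^ 2))).
    set (C3 := N ^ 2 * ((INR m + 2) - (INR m + 2) ^ 2 / (2 * INR m + 3))).
    destruct (Q_props sigma A3 0 C3 m Hs) as [Qd [Qc [Ql Q0]]].
    replace (- c) with ((- c * N ^ 2) * (sigma ^ (2 * S (S m) + 1) * K (S (S m)))) by
      (rewrite Rmult_assoc, HN2; ring).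
    apply (left_int _ (fun p => (- c * N ^ 2) * fp sigma (S (S m)) p) (Qf sigma A3 0 C3 m)); auto.
    - apply J_scal; auto.
    - intros p Hp. rewrite psi_neg, DDpsi_neg by auto.
      rewrite (is_derive_unique _ _ _ (d_Qf sigma A3 0 C3 m p Hs)).
      rewrite <- HNdef. unfold c, A3, C3. ident_tac m. field. lra. }
  assert (I5 : forall tau, is_RInt_gen (A_integrand1 alpha sigma (S (S m)) tau)
      (Rbar_locally m_infty) (at_point 0) ((alpha ^ 4 * tau ^ 2 * N ^ 2) * (sigma ^ (2 * m + 1) * K m))).
  { intros tau. destruct (Q_props sigma 0 0 0 m Hs) as [Qd [Qc [Ql Q0]]].
    apply (left_int _ (fun p => (alpha ^ 4 * tau ^ 2 * N ^ 2) * fp sigma m p) (Qf sigma 0 0 0 m)); auto.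
    - apply J_scal; auto.
    - intros p Hp. unfold A_integrand1. rewrite psi_neg by auto.
      rewrite (is_derive_unique _ _ _ (d_Qf sigma 0 0 0 m p Hs)).
      rewrite <- HNdef. ident_tac m. field. lra. }
  destruct (whole_line _ _ I1) as [V1 _].
  { intros p Hp. rewrite psi_nonneg by lra. ring. }
  destruct (whole_line _ _ I2) as [V2 E2].
  { intros p Hp. unfold A_integrand2. rewrite Dpsi_pos by lra. ring. }
  destruct (whole_line _ _ I3) as [V3 _].
  { intros p Hp. rewrite psi_nonneg by lra. ring. }
  destruct (whole_line _ _ I4) as [V4 _].
  { intros p Hp. rewrite psi_nonneg by lra. ring. }
  assert (V5 : forall tau, int_R (A_integrand1 alpha sigma (S (S m)) tau)
      = (alpha ^ 4 * tau ^ 2 * N ^ 2) * (sigma ^ (2 * m + 1) * K m)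
      /\ ex_int_R (A_integrand1 alpha sigma (S (S m)) tau)).
  { intros tau. apply whole_line; [apply I5|].
    intros p Hp. unfold A_integrand1. rewrite psi_nonneg by lra. ring. }
  assert (Hc : A_n alpha hbar sigma (S (S m)) 0 = 4 * PI * hbar ^ 2 * c).
  { unfold A_n. rewrite (proj1 (V5 0)), V2. ring. }
  assert (HPI := PI_RGT_0).
  assert (Hc0 : 0 < c).
  { unfold c. apply Rdiv_lt_0_compat; [lra|]. apply Rmult_lt_0_compat; [lra|]. apply pow_lt; lra. }
  assert (HRe : Re (Delta_a_sq hbar sigma (S (S m))) = hbar ^ 2 * c).
  { unfold Delta_a_sq, expect_a2, expect_a. rewrite V3, V4.
    unfold Cminus, Cmult, Cplus, Copp, Re; simpl. ring. }
  split; [exact V1|].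
  split; [intros tau; apply (proj2 (V5 tau))|].
  split; [exact E2|].
  split.
  { intros tau. rewrite Hc. unfold A_n. rewrite (proj1 (V5 tau)), V2.
    assert (0 <= alpha ^ 4 * tau ^ 2 * N ^ 2 * (sigma ^ (2 * m + 1) * K m)).
    { apply Rmult_le_pos; [|apply Rmult_le_pos; [apply pow_le; lra|lra]].
      apply Rmult_le_pos; [apply Rmult_le_pos; [apply pow_le; lra|]|];
        rewrite <- Rsqr_pow2; apply Rle_0_sqr. }
    nra. }
  split.
  { rewrite Hc. unfold c. rewrite !S_INR. field. split; lra. }
  split.
  { unfold expect_a. rewrite V3, Rmult_0_r. reflexivity. }
  split.
  { unfold Delta_a_sq, expect_a2, expect_a. rewrite V3, V4.
    unfold Cminus, Cmult, Cplus, Copp, Im; simpl. ring. }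
  split.
  { rewrite Hc, HRe. ring. }
  rewrite HRe.
  replace (hbar ^ 2 * c) with ((hbar / sigma) ^ 2 * ((4 * INR (S (S m)) - 1) / (4 * INR (S (S m)) - 2))).
  2:{ unfold c. rewrite !S_INR. field. repeat split; lra. }
  rewrite sqrt_mult_alt.
  - rewrite sqrt_pow2; [reflexivity|]. apply Rlt_le, Rdiv_lt_0_compat; lra.
  - apply pow2_ge_0.
Qed.
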